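(* Let $M$ be an $n\times n$ positive semidefinite matrix of rank $d$, and write $M=V^TV$ with $V\in\mathbb{R}^{d\times n}$ having columns $v_1,\dots,v_n$. Let $\alpha\ge 0$ and let $c=(c_1,\dots,c_n)$ be an $\alpha$-optimal solution of the program \[ \text{maximize } \ln\det\Big(\sum_{i=1}^n c_iv_iv_i^T\Big)\quad\text{s.t. } \sum_{i=1}^n c_i=d,\ c_i\ge 0\ \ \forall i. \] Let $S$ be a random multiset of $d$ elements of $[n]$, each sampled independently with replacement with $\Pr[\text{element}=\ell]=c_\ell/d$. Then \[ \mathbb{E}\,\det(M_{S,S})\ \ge\ \frac{d!}{d^d}\,e^{-\alpha}\,\mathrm{msd}_d(M), \] and $\frac{d!}{d^d}\sim\sqrt{2\pi d}\,e^{-d}$.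
   Context: For a multiset $S$ of indices, $M_{S,S}$ is the submatrix of $M$ with rows and columns indexed by $S$, repeated according to multiplicity. $\mathrm{msd}_j(M)\coloneqq\max\{\det(M_{T,T}): T\subseteq[n],\ |T|=j\}$. A feasible solution $c$ of a maximization problem with optimal value $v^*$ is $\alpha$-optimal if its objective value is at least $v^*-\alpha$ (with $\ln\det$ of a singular matrix taken to be $-\infty$). *)

(* Defs.v *)
From HB Require Import structures.
From Stdlib Require Import Reals Lra ClassicalEpsilon FunctionalExtensionality.
From mathcomp Require Import all_boot all_order all_algebra.
Set Implicit Arguments. Unset Strict Implicit. Unset Printing Implicit Defensive.
Import Order.TTheory GRing.Theory Num.Theory.

Definition eqr (x y : R) : bool := if Req_EM_T x y then true else false.
Lemma eqrP : Equality.axiom eqr.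
Proof. move=> x y; rewrite /eqr; case: Req_EM_T => h; [left|right]; done. Qed.
HB.instance Definition _ := hasDecEq.Build R eqrP.

Fact inhR : inhabited R. Proof. exact: (inhabits (IZR 0)). Qed.
Definition pickR (P : pred R) (n : nat) :=
  let x := epsilon inhR P in if P x then Some x else None.
Fact pickR_some P n x : pickR P n = Some x -> P x.
Proof. by rewrite /pickR; case: (boolP (P _)) => // Px [<-]. Qed.
Fact pickR_ex (P : pred R) : (exists x : R, P x) -> exists n, pickR P n.
Proof. by rewrite /pickR; move=> /(epsilon_spec inhR)->; exists 0%N. Qed.
Fact pickR_ext (P Q : pred R) : P =1 Q -> pickR P =1 pickR Q.
Proof.
move=> PEQ n; rewrite /pickR.
have -> : P = Q by apply: functional_extensionality.
by [].
Qed.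
HB.instance Definition _ := hasChoice.Build R pickR_some pickR_ex pickR_ext.

Lemma R_addA : associative Rplus. Proof. move=> *; ring. Qed.
Lemma R_addC : commutative Rplus. Proof. move=> *; ring. Qed.
Lemma R_add0 : left_id (IZR 0) Rplus. Proof. move=> *; ring. Qed.
Lemma R_addN : left_inverse (IZR 0) Ropp Rplus. Proof. move=> *; ring. Qed.
HB.instance Definition _ := GRing.isZmodule.Build R R_addA R_addC R_add0 R_addN.

Lemma R_mulA : associative Rmult. Proof. move=> *; ring. Qed.
Lemma R_mulC : commutative Rmult. Proof. move=> *; ring. Qed.
Lemma R_mul1 : left_id (IZR 1) Rmult. Proof. move=> *; ring. Qed.
Lemma R_mulDl : left_distributive Rmult Rplus. Proof. move=> *; ring. Qed.
Lemma R_one_neq0 : (IZR 1 != IZR 0). Proof. by apply/eqP; apply: R1_neq_R0. Qed.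
HB.instance Definition _ :=
  GRing.Zmodule_isComNzRing.Build R R_mulA R_mulC R_mul1 R_mulDl R_one_neq0.

Local Open Scope ring_scope.
Definition Rinvx (x : R) : R := if x == 0 then 0 else Rinv x.
Lemma R_mulVf (x : R) : x != 0 -> Rinvx x * x = 1.
Proof. move=> hx; move/eqP: (hx) => h; rewrite /Rinvx (negPf hx); exact: (Rinv_l x h). Qed.
Lemma R_inv0 : Rinvx 0 = 0. Proof. by rewrite /Rinvx eqxx. Qed.
HB.instance Definition _ := GRing.ComNzRing_isField.Build R R_mulVf R_inv0.

Definition Rleb (x y : R) : bool := if Rle_dec x y then true else false.
Definition Rltb (x y : R) : bool := if Rlt_dec x y then true else false.
Lemma RlebP x y : reflect (Rle x y) (Rleb x y).
Proof. rewrite /Rleb; case: Rle_dec=> h; [left|right]; done. Qed.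
Lemma RltbP x y : reflect (Rlt x y) (Rltb x y).
Proof. rewrite /Rltb; case: Rlt_dec=> h; [left|right]; done. Qed.
Lemma R0E : (0 : R) = IZR 0. Proof. by []. Qed.
Lemma RaddE (x y : R) : x + y = Rplus x y. Proof. by []. Qed.
Lemma RmulE (x y : R) : x * y = Rmult x y. Proof. by []. Qed.
Lemma RoppE (x : R) : - x = Ropp x. Proof. by []. Qed.

Lemma R_le0_add x y : Rleb 0 x -> Rleb 0 y -> Rleb 0 (x + y).
Proof. move=> /RlebP h1 /RlebP h2; apply/RlebP; lra. Qed.
Lemma R_le0_mul x y : Rleb 0 x -> Rleb 0 y -> Rleb 0 (x * y).
Proof. move=> /RlebP h1 /RlebP h2; apply/RlebP; exact: Rmult_le_pos. Qed.
Lemma R_le0_anti x : Rleb 0 x -> Rleb x 0 -> x = 0.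
Proof. move=> /RlebP h1 /RlebP h2; apply: Rle_antisym. exact: h2. exact: h1. Qed.
Lemma R_sub_ge0 x y : Rleb 0 (y - x) = Rleb x y.
Proof. by apply/RlebP/RlebP; rewrite /Rminus; lra. Qed.
Lemma R_le0_total x : Rleb 0 x || Rleb x 0.
Proof. case: (Rle_dec 0 x) => h; [by rewrite /Rleb; case: Rle_dec|].
by apply/orP; right; apply/RlebP; lra. Qed.
Lemma R_normN x : Rabs (- x) = Rabs x. Proof. exact: Rabs_Ropp. Qed.
Lemma R_ge0_norm x : Rleb 0 x -> Rabs x = x.
Proof. by move=> /RlebP h; apply: Rabs_right; lra. Qed.
Lemma R_lt_def x y : Rltb x y = (y != x) && Rleb x y.
Proof.
apply/RltbP/andP => [h|[/eqP h1 /RlebP h2]]; last by lra.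
by split; [apply/eqP; lra| apply/RlebP; lra].
Qed.
HB.instance Definition _ := Num.IntegralDomain_isLeReal.Build R
  R_le0_add R_le0_mul R_le0_anti R_sub_ge0 R_le0_total R_normN R_ge0_norm R_lt_def.


Definition psd (n : nat) (M : 'M[R]_n) : Prop :=
  M^T = M /\ forall x : 'cV[R]_n, 0 <= (x^T *m M *m x) 0 0.

Definition subm (n k : nat) (M : 'M[R]_n) (s : 'I_k -> 'I_n) : 'M[R]_k :=
  \matrix_(i < k, j < k) M (s i) (s j).

Definition pminor (n : nat) (M : 'M[R]_n) (T : {set 'I_n}) : R :=
  \det (subm M (fun i : 'I_#|T| => enum_val i)).

Definition msd (n : nat) (j : nat) (M : 'M[R]_n) : R :=
  \big[Num.max/0]_(T : {set 'I_n} | #|T| == j) pminor M T.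

Definition feasible (n d : nat) (c : 'I_n -> R) : Prop :=
  (forall i, 0 <= c i) /\ \sum_i c i = d%:R.

Definition wmx (n d : nat) (V : 'M[R]_(d, n)) (c : 'I_n -> R) : 'M[R]_d :=
  \sum_i c i *: (col i V *m (col i V)^T).

(* ln det A in the extended reals: None stands for -infinity
   (ln det of a singular matrix is -infinity; for the PSD matrices
   occurring here det is never negative). *)
Definition lndet (d : nat) (A : 'M[R]_d) : option R :=
  if 0 < \det A then Some (ln (\det A)) else None.

Definition ext_ge_sub (x y : option R) (a : R) : Prop :=
  match y with
  | None => True
  | Some yv => match x with None => False | Some xv => yv - a <= xv end
  end.

(* c is alpha-optimal for  max ln det (sum c_i v_i v_i^T)  s.t. feasible c:
   c is feasible and its objective value is at least v* - alpha, where v*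
   is the optimal value (i.e. at least (value of c') - alpha for every
   feasible c'). *)
Definition alpha_optimal (n d : nat) (V : 'M[R]_(d, n)) (alpha : R)
    (c : 'I_n -> R) : Prop :=
  feasible d c /\
  forall c' : 'I_n -> R, feasible d c' ->
    ext_ge_sub (lndet (wmx V c)) (lndet (wmx V c')) alpha.

(* E det(M_{S,S}) where S = (s_1,...,s_d) consists of d indices drawn
   independently with replacement, Pr[s_k = l] = c_l / d. *)
Definition expected_det (n d : nat) (M : 'M[R]_n) (c : 'I_n -> R) : R :=
  \sum_(s : {ffun 'I_d -> 'I_n})
     (\prod_(k < d) (c (s k) / d%:R)) * \det (subm M s).

Local Close Scope ring_scope.
Definition stirling_ratio (k : nat) : R :=
  (INR (k`!) / (INR k ^ k)) / (sqrt (2 * PI * INR k) * exp (- INR k)).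

(* Main.v *)
Require Import Defs.
From HB Require Import structures.
From Stdlib Require Import Reals Lra Psatz ZArith.
From mathcomp Require Import all_boot all_order all_algebra all_fingroup.
From Coquelicot Require Coquelicot.
Set Implicit Arguments. Unset Strict Implicit. Unset Printing Implicit Defensive.

Module Stir.
Import Coquelicot.Coquelicot.
Local Open Scope R_scope.
Notation fact := Factorial.fact.

Lemma mvt_pos (F F' : R -> R) (t : R) :
  0 <= t ->
  (forall x, 0 <= x -> is_derive F x (F' x)) ->
  (forall x, 0 <= x -> 0 <= F' x) -> F 0 <= F t.
Proof.
move=> ht hd hp.
case: (Rle_lt_or_eq_dec _ _ ht) => ht'; last by rewrite -ht'; lra.
have [c [hc1 hc2]] := MVT_cor2 F F' 0 t ht'
  (fun c hc => proj1 (is_derive_Reals F c (F' c)) (hd c (proj1 hc))).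
have := hp c (Rlt_le _ _ (proj1 hc2)).
nra.
Qed.

Lemma ln_lower (t : R) : 0 <= t -> 2 * t / (2 + t) <= ln (1 + t).
Proof.
move=> ht.
pose F := fun x => ln (1 + x) - 2 * x / (2 + x).
pose F' := fun x => x ^ 2 / ((1 + x) * (2 + x) ^ 2).
have h := @mvt_pos F F' t ht.
have : F 0 <= F t.
  apply: h.
  - move=> x hx; rewrite /F /F'.
    auto_derive; first by lra.
    field; lra.
  - move=> x hx; rewrite /F'.
    apply: Rmult_le_pos; first nra.
    apply: Rlt_le; apply: Rinv_0_lt_compat; nra.
rewrite /F Rplus_0_r ln_1.
have -> : 2 * 0 / (2 + 0) = 0 by field.
lra.
Qed.

Lemma ln_upper (t : R) : 0 <= t -> ln (1 + t) <= t - t ^ 2 / 2 + t ^ 3 / 3.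
Proof.
move=> ht.
pose F := fun x => x - x ^ 2 / 2 + x ^ 3 / 3 - ln (1 + x).
pose F' := fun x => x ^ 3 / (1 + x).
have : F 0 <= F t.
  apply: (@mvt_pos F F' t ht).
  - move=> x hx; rewrite /F /F'.
    auto_derive; first by lra.
    field; lra.
  - move=> x hx; rewrite /F'.
    apply: Rmult_le_pos; first nra.
    apply: Rlt_le; apply: Rinv_0_lt_compat; nra.
rewrite /F Rplus_0_r ln_1.
lra.
Qed.

Lemma ln_ratio (y : R) : 0 < y -> ln (y + 1) - ln y = ln (1 + / y).
Proof.
move=> hy.
have -> : 1 + / y = (y + 1) * / y by field; lra.
rewrite ln_mult; [|lra|by apply: Rinv_0_lt_compat].
rewrite ln_Rinv //; lra.
Qed.

Lemma d_lower (y : R) : 1 <= y -> 0 <= (y + / 2) * (ln (y + 1) - ln y) - 1.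
Proof.
move=> hy.
rewrite ln_ratio; last lra.
have ht : 0 <= / y by apply: Rlt_le; apply: Rinv_0_lt_compat; lra.
have h := ln_lower ht.
have e : (y + / 2) * (2 * / y / (2 + / y)) = 1 by field; lra.
have : (y + / 2) * (2 * / y / (2 + / y)) <= (y + / 2) * ln (1 + / y).
  apply: Rmult_le_compat_l; lra.
lra.
Qed.

Lemma d_upper (y : R) : 1 <= y ->
  (y + / 2) * (ln (y + 1) - ln y) - 1 <= / (2 * y) - / (2 * (y + 1)).
Proof.
move=> hy.
rewrite ln_ratio; last lra.
have ht0 : 0 < / y by apply: Rinv_0_lt_compat; lra.
have ht1 : / y <= 1.
  rewrite -Rinv_1; apply: Rinv_le_contravar; lra.
have h := ln_upper (Rlt_le _ _ ht0).
set t := / y in h ht0 ht1 *.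
have ey : y = / t by rewrite /t Rinv_inv.
have h2 : (y + / 2) * ln (1 + t) <= (y + / 2) * (t - t ^ 2 / 2 + t ^ 3 / 3).
  apply: Rmult_le_compat_l; lra.
have e1 : (y + / 2) * (t - t ^ 2 / 2 + t ^ 3 / 3) - 1 = t ^ 2 / 12 + t ^ 3 / 6.
  rewrite ey; field; lra.
have e2 : / (2 * y) - / (2 * (y + 1)) - (t ^ 2 / 12 + t ^ 3 / 6)
          = t ^ 2 * (1 - t) * (5 + 2 * t) / (12 * (1 + t)).
  rewrite ey; field; split; lra.
have : 0 <= t ^ 2 * (1 - t) * (5 + 2 * t) / (12 * (1 + t)).
  apply: Rmult_le_pos.
    apply: Rmult_le_pos; [apply: Rmult_le_pos; nra | lra].
  apply: Rlt_le; apply: Rinv_0_lt_compat; lra.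
lra.
Qed.

Definition a (n : nat) : R := ln (INR (fact n)) - (INR n + / 2) * ln (INR n) + INR n.
Definition u (n : nat) : R := a (S n).

Lemma a_diff (n : nat) :
  a (S n) - a (S (S n)) = (INR (S n) + / 2) * (ln (INR (S n) + 1) - ln (INR (S n))) - 1.
Proof.
have hn' : 0 < INR (S n) by apply: lt_0_INR; apply: Nat.lt_0_succ.
rewrite /a.
have -> : fact (S (S n)) = (S (S n) * fact (S n))%nat by [].
rewrite (mult_INR (S (S n)) (fact (S n))) (ln_mult (INR (S (S n)))); last first.
- exact: INR_fact_lt_0.
- rewrite S_INR; lra.
rewrite [INR (S (S n))]S_INR.
ring.
Qed.

Lemma INR_S_ge1 (n : nat) : 1 <= INR (S n).
Proof. rewrite S_INR; have := pos_INR n; lra. Qed.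

Lemma u_decr : Un_decreasing u.
Proof.
move=> n; rewrite /u.
have := a_diff n.
have := d_lower (INR_S_ge1 n).
lra.
Qed.

Lemma u_lb (n : nat) : u 0 - / 2 <= u n.
Proof.
suff : forall n, u 0 - / 2 <= u n - / (2 * INR (S n)).
  move=> h; have := h n.
  have : 0 <= / (2 * INR (S n)).
    apply: Rlt_le; apply: Rinv_0_lt_compat; have := INR_S_ge1 n; lra.
  lra.
elim=> [|m IH].
  rewrite /= Rmult_1_r; lra.
have := a_diff m.
have := d_upper (INR_S_ge1 m).
rewrite /u in IH *.
rewrite [INR (S (S m))]S_INR.
lra.
Qed.

Lemma u_cv : { C : R | Un_cv u C }.
Proof.
apply: decreasing_cv; first exact: u_decr.
exists (- (u 0 - / 2)) => x [n ->].
rewrite /opp_seq; have := u_lb n; lra.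
Qed.

Lemma minusR (x y : R) : minus x y = x - y. Proof. by []. Qed.
Lemma scalR (x y : R) : scal x y = x * y. Proof. by []. Qed.

Definition I (n : nat) : R := RInt (fun x => sin x ^ n) 0 (PI / 2).

Lemma PI2_pos : 0 < PI / 2.
Proof. have := PI_RGT_0; lra. Qed.

Lemma sinpow_ex (n : nat) : ex_RInt (fun x => sin x ^ n) 0 (PI / 2).
Proof.
apply: ex_RInt_continuous => z _.
apply: ex_derive_continuous; auto_derive; done.
Qed.

Lemma I_0 : I 0 = PI / 2.
Proof.
rewrite /I /=. rewrite RInt_const /scal /= /mult /=. ring.
Qed.

Lemma I_1 : I 1 = 1.
Proof.
rewrite /I.
have h : is_RInt (fun x => sin x ^ 1) 0 (PI / 2) (minus ((fun x => - cos x) (PI / 2)) ((fun x => - cos x) 0)).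
  refine (is_RInt_derive (fun x => - cos x) (fun x => sin x ^ 1) 0 (PI/2) _ _) => x _.
    auto_derive; first done. ring.
  apply: ex_derive_continuous; auto_derive; done.
rewrite (is_RInt_unique _ _ _ _ h) /minus /plus /opp /= cos_PI2 cos_0; ring.
Qed.

Lemma I_rec (n : nat) : INR (S (S n)) * I (S (S n)) = INR (S n) * I n.
Proof.
pose F := fun x => - cos x * sin x ^ (S n).
pose f := fun x => INR (S (S n)) * sin x ^ (S (S n)) - INR (S n) * sin x ^ n.
have h : is_RInt f 0 (PI / 2) (minus (F (PI / 2)) (F 0)).
  refine (is_RInt_derive F f 0 (PI/2) _ _) => x _.
    rewrite /F /f; auto_derive; first done.
    change (match n with 0%nat => 1 | S _ => INR n + 1 end) with (INR (S n)).
    have hc : cos x * cos x = 1 - sin x * sin x.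
      have := sin2_cos2 x; rewrite /Rsqr; lra.
    transitivity (sin x * (sin x * sin x ^ n) - INR (S n) * sin x ^ n * (cos x * cos x)).
      ring.
    rewrite hc [INR (S (S n))]S_INR /=; ring.
  apply: ex_derive_continuous; rewrite /f; auto_derive; done.
have h2 := is_RInt_minus _ _ _ _ _ _
  (is_RInt_scal _ _ _ (INR (S (S n))) _ (RInt_correct _ _ _ (sinpow_ex (S (S n)))))
  (is_RInt_scal _ _ _ (INR (S n)) _ (RInt_correct _ _ _ (sinpow_ex n))).
have e1 : RInt f 0 (PI / 2) = minus (F (PI / 2)) (F 0) := is_RInt_unique _ _ _ _ h.
have e2 : RInt f 0 (PI / 2) = minus (scal (INR (S (S n))) (I (S (S n))))
                                    (scal (INR (S n)) (I n)) := is_RInt_unique _ _ _ _ h2.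
rewrite e1 /F !minusR !scalR cos_PI2 sin_0 in e2.
have : INR (S (S n)) * I (S (S n)) - INR (S n) * I n = 0.
  rewrite -e2 /=; ring.
lra.
Qed.

Lemma I_decr (n : nat) : I (S n) <= I n.
Proof.
apply: RInt_le; first by apply: Rlt_le; exact: PI2_pos.
- exact: sinpow_ex.
- exact: sinpow_ex.
move=> x [h1 h2] /=.
have hs0 : 0 <= sin x by apply: sin_ge_0; have := PI_RGT_0; lra.
have hs1 : sin x <= 1 by have := SIN_bound x; lra.
have hp : 0 <= sin x ^ n by apply: pow_le.
nra.
Qed.

Lemma I_pos (n : nat) : 0 < I n.
Proof.
suff : 0 < I n /\ 0 < I (S n) by case.
elim: n => [|n [IH1 IH2]].
  rewrite I_0 I_1; split; [exact: PI2_pos|lra].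
split => //.
have e := I_rec n.
have hS : 0 < INR (S (S n)) by apply: lt_0_INR; lia.
have hS' : 0 < INR (S n) by apply: lt_0_INR; lia.
have : 0 < INR (S (S n)) * I (S (S n)) by rewrite e; nra.
move=> h; nra.
Qed.

Fixpoint dbl (n : nat) : nat := match n with 0%nat => 0%nat | S m => S (S (dbl m)) end.

Lemma INR_dbl (n : nat) : INR (dbl n) = 2 * INR n.
Proof.
elim: n => [|n IH]; first by rewrite /=; ring.
rewrite [dbl (S n)]/= !S_INR IH; ring.
Qed.

Lemma INR_fact_S (m : nat) : INR (fact (S m)) = (INR m + 1) * INR (fact m).
Proof. by rewrite (fact_simpl m) mult_INR S_INR. Qed.

Lemma I_even (n : nat) :
  I (dbl n) * 4 ^ n * INR (fact n) ^ 2 = PI / 2 * INR (fact (dbl n)).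
Proof.
elim: n => [|n IH].
  rewrite /= I_0; ring.
have r := I_rec (dbl n).
rewrite [dbl (S n)]/= in r *.
rewrite !INR_fact_S [INR (S (S (dbl n)))]S_INR S_INR INR_dbl in r *.
rewrite [4 ^ S n]/=.
set x := INR n in r *.
set J2 := I (S (S (dbl n))) in r *.
set J0 := I (dbl n) in r IH *.
set F := INR (fact (dbl n)) in IH *.
set f := INR (fact n) in IH *.
have -> : PI / 2 * ((2 * x + 1 + 1) * ((2 * x + 1) * F))
        = (2 * x + 1 + 1) * (2 * x + 1) * (PI / 2 * F) by ring.
rewrite -IH.
transitivity (2 * (x + 1) * ((2 * x + 1 + 1) * J2) * 4 ^ n * f ^ 2); first ring.
rewrite r; ring.
Qed.

Lemma I_odd (n : nat) :
  I (S (dbl n)) * INR (fact (S (dbl n))) = 4 ^ n * INR (fact n) ^ 2.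
Proof.
elim: n => [|n IH].
  rewrite /= I_1; ring.
have r := I_rec (S (dbl n)).
rewrite [dbl (S n)]/= in r *.
rewrite !INR_fact_S [INR (S (S (S (dbl n))))]S_INR [INR (S (S (dbl n)))]S_INR S_INR INR_dbl in r *.
rewrite [4 ^ S n]/=.
set x := INR n in r *.
set J3 := I (S (S (S (dbl n)))) in r *.
set J1 := I (S (dbl n)) in r IH *.
set F := INR (fact (dbl n)) in IH *.
set f := INR (fact n) in IH *.
rewrite INR_fact_S INR_dbl -/x -/F in IH.
transitivity ((2 * x + 1 + 1) * (2 * x + 1) * F * ((2 * x + 1 + 1 + 1) * J3)); first ring.
rewrite r.
transitivity ((2 * x + 1 + 1) * (2 * x + 1 + 1) * (J1 * ((2 * x + 1) * F))); first ring.
rewrite IH; ring.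
Qed.

Lemma nat_big (M : R) : exists N : nat, forall n : nat, le N n -> M < INR n.
Proof.
have [h1 _] := archimed (Rabs M).
have hz : Z.lt 0 (up (Rabs M)).
  apply: lt_IZR; have := Rabs_pos M; lra.
exists (Z.to_nat (up (Rabs M))) => n hn.
have := le_INR _ _ hn.
rewrite INR_IZR_INZ Z2Nat.id; last lia.
have := Rle_abs M; lra.
Qed.

Lemma cv_lin_inv (p q : R) : 0 < p -> 0 < q -> Un_cv (fun n => / (p * INR n + q)) 0.
Proof.
move=> hp hq.
apply: cv_infty_cv_0 => M.
have [N hN] := nat_big (M / p).
exists N => n hn.
have := hN n hn => h.
have : M < p * INR n.
  have -> : M = p * (M / p) by field; lra.
  by apply: Rmult_lt_compat_l.
have := pos_INR n; nra.
Qed.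

Definition r (n : nat) : R := I (S (dbl n)) / I (dbl n).

Lemma r_bounds (n : nat) : 1 - / (2 * INR n + 2) <= r n <= 1.
Proof.
have h0 := I_pos (dbl n).
have h1 := I_decr (dbl n).
have h2 := I_decr (S (dbl n)).
have e := I_rec (dbl n).
rewrite [INR (S (S (dbl n)))]S_INR S_INR INR_dbl in e.
have hx := pos_INR n.
have eS : I (S (dbl n)) / I (dbl n) * I (dbl n) = I (S (dbl n)) by field; lra.
have eSS : (2 * INR n + 1) / (2 * INR n + 2) * I (dbl n) = I (S (S (dbl n))).
  apply: (Rmult_eq_reg_l (2 * INR n + 1 + 1)); last lra.
  rewrite e; field; lra.
rewrite /r; split.
- have -> : 1 - / (2 * INR n + 2) = (2 * INR n + 1) / (2 * INR n + 2) by field; lra.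
  apply: (Rmult_le_reg_r (I (dbl n))) => //.
  rewrite eS eSS; lra.
- apply: (Rmult_le_reg_r (I (dbl n))) => //.
  rewrite eS; lra.
Qed.

Lemma r_cv : Un_cv r 1.
Proof.
move=> eps he.
have [N hN] := cv_lin_inv Rlt_0_2 Rlt_0_2 he.
exists N => n hn.
have := hN n hn.
have := r_bounds n.
have hp : 0 < / (2 * INR n + 2).
  apply: Rinv_0_lt_compat; have := pos_INR n; lra.
rewrite /R_dist Rminus_0_r Rabs_pos_eq; last lra.
move=> hb h.
rewrite Rabs_left1; lra.
Qed.

Lemma ln_cont (y : R) : 0 < y -> continuity_pt ln y.
Proof.
move=> hy; apply: derivable_continuous_pt.
exists (/ y); exact: derivable_pt_lim_ln.
Qed.

Lemma fact_pos (n : nat) : 0 < INR (fact n).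
Proof. exact: INR_fact_lt_0. Qed.

Lemma ln_r (m : nat) :
  ln (r (S m)) = 4 * u m - 2 * u (S (dbl m)) + ln (INR (S m))
                 - ln (2 * INR (S m) + 1) - ln PI.
Proof.
set n := S m.
have hx : 0 < INR n by apply: lt_0_INR; lia.
set x := INR n in hx *.
have hpi := PI_RGT_0.
have hI0 := I_pos (dbl n).
have hI1 := I_pos (S (dbl n)).
have hf := fact_pos n.
have hF := fact_pos (dbl n).
have h4 : 0 < 4 ^ n by apply: pow_lt; lra.
have i2 : INR 2 = 2 by rewrite /=; ring.
have L1 : ln (I (S (dbl n))) + ln (2 * x + 1) + ln (INR (fact (dbl n)))
          = INR n * ln 4 + 2 * ln (INR (fact n)).
  have e := I_odd n.
  rewrite INR_fact_S INR_dbl -/x in e.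
  have := f_equal ln e.
  rewrite ln_mult; [|lra|nra].
  rewrite ln_mult; [|lra|lra].
  rewrite ln_mult; [|lra|apply: pow_lt; lra].
  rewrite !ln_pow; [|lra|lra].
  rewrite i2 => h; lra.
have L2 : ln (I (dbl n)) + INR n * ln 4 + 2 * ln (INR (fact n))
          = ln PI - ln 2 + ln (INR (fact (dbl n))).
  have e := I_even n.
  have := f_equal ln e.
  rewrite ln_mult; [|apply: Rmult_lt_0_compat; lra|apply: pow_lt; lra].
  rewrite ln_mult; [|lra|lra].
  rewrite ln_mult; [|lra|lra].
  rewrite !ln_pow; [|lra|lra].
  rewrite /Rdiv ln_mult; [|lra|lra].
  rewrite ln_Rinv; [|lra].
  rewrite i2 => h; lra.
have L3 : ln (r n) = ln (I (S (dbl n))) - ln (I (dbl n)).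
  rewrite /r /Rdiv ln_mult; [|lra|apply: Rinv_0_lt_compat; lra].
  rewrite ln_Rinv //; ring.
have L4 : ln (INR (fact n)) = u m + (x + / 2) * ln x - x.
  rewrite /u /a -/n -/x; ring.
have L5 : ln (INR (fact (dbl n))) = u (S (dbl m)) + (2 * x + / 2) * (ln 2 + ln x) - 2 * x.
  have -> : u (S (dbl m)) = a (dbl n) by [].
  rewrite /a INR_dbl -/x ln_mult; [|lra|lra].
  ring.
have L6 : ln 4 = 2 * ln 2.
  have -> : 4 = 2 * 2 by ring.
  rewrite ln_mult; lra.
rewrite L3.
rewrite L6 L4 L5 in L1 L2.
rewrite -/x.
rewrite -/x in L1 L2; lra.
Qed.

Lemma dbl_ge (m : nat) : le m (dbl m).
Proof. elim: m => [|m IH] /=; lia. Qed.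

Lemma cv_shift (v : nat -> R) (l : R) : Un_cv v l -> Un_cv (fun m => v (S m)) l.
Proof.
move=> h eps he; have [N hN] := h eps he.
exists N => n hn; apply: hN; lia.
Qed.

Lemma cv_unshift (v : nat -> R) (l : R) : Un_cv (fun m => v (S m)) l -> Un_cv v l.
Proof.
move=> h eps he; have [N hN] := h eps he.
exists (S N) => n hn.
have -> : n = S (Nat.pred n) by lia.
apply: hN; lia.
Qed.

Lemma cv_sub (C : R) : Un_cv u C -> Un_cv (fun m => u (S (dbl m))) C.
Proof.
move=> h eps he; have [N hN] := h eps he.
exists N => n hn; apply: hN; have := dbl_ge n; lia.
Qed.

Lemma cv_const (c : R) : Un_cv (fun _ => c) c.
Proof.
move=> eps he; exists 0%nat => n _; rewrite /R_dist Rminus_eq_0 Rabs_R0; lra.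
Qed.

Lemma twoC (C : R) : Un_cv u C -> 2 * C = ln (2 * PI).
Proof.
move=> hC.
have hv : Un_cv (fun m => 4 * u m - 2 * u (S (dbl m))) (4 * C - 2 * C).
  apply: CV_minus; apply: CV_mult; try exact: cv_const.
    exact: hC.
  exact: cv_sub.
have hw : Un_cv (fun m => ln (r (S m)) + ln (2 + / (1 * INR m + 1)) + ln PI)
                (ln 1 + ln (2 + 0) + ln PI).
  apply: CV_plus; last exact: cv_const.
  apply: CV_plus.
    apply: (continuity_seq ln (fun m => r (S m))); first by apply: ln_cont; lra.
    exact: cv_shift r_cv.
  apply: (continuity_seq ln (fun m => 2 + / (1 * INR m + 1))); first by apply: ln_cont; lra.
  apply: CV_plus; first exact: cv_const.
  exact: cv_lin_inv Rlt_0_1 Rlt_0_1.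
have e : forall m, 4 * u m - 2 * u (S (dbl m))
                   = ln (r (S m)) + ln (2 + / (1 * INR m + 1)) + ln PI.
  move=> m.
  have hx : 0 < INR m + 1 by have := pos_INR m; lra.
  rewrite ln_r S_INR.
  have -> : 2 + / (1 * INR m + 1) = (2 * (INR m + 1) + 1) * / (INR m + 1) by field; lra.
  rewrite ln_mult; [|lra|apply: Rinv_0_lt_compat; lra].
  rewrite ln_Rinv; [ring|lra].
have e2 : 4 * C - 2 * C = ln 1 + ln (2 + 0) + ln PI.
  apply: (UL_sequence _ _ _ hv).
  apply: (Un_cv_ext _ _ _ _ hw) => m; by rewrite e.
rewrite ln_1 Rplus_0_r in e2.
rewrite ln_mult; [lra|lra|exact: PI_RGT_0].
Qed.

Lemma factE (n : nat) : n`! = fact n.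
Proof. elim: n => [//|n IH]; by rewrite factS IH. Qed.

Lemma ln_sqrt' (y : R) : 0 < y -> ln (sqrt y) = ln y / 2.
Proof.
move=> hy.
have hs : 0 < sqrt y by apply: sqrt_lt_R0.
have : ln y = ln (sqrt y) + ln (sqrt y).
  by rewrite -ln_mult // sqrt_sqrt //; lra.
lra.
Qed.

Lemma stir_eq (m : nat) : stirling_ratio (S m) = exp (u m - ln (2 * PI) / 2).
Proof.
rewrite /stirling_ratio factE.
set k := S m.
have hx : 0 < INR k by apply: lt_0_INR; lia.
set x := INR k in hx *.
have hK := fact_pos k.
set K := INR (fact k) in hK *.
have hpi := PI_RGT_0.
have hxk : 0 < x ^ k by apply: pow_lt.
have h2pix : 0 < 2 * PI * x by apply: Rmult_lt_0_compat; lra.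
have hsq : 0 < sqrt (2 * PI * x) by apply: sqrt_lt_R0.
have he := exp_pos (- x).
have hA : 0 < K / x ^ k by apply: Rdiv_lt_0_compat.
have hB : 0 < sqrt (2 * PI * x) * exp (- x) by apply: Rmult_lt_0_compat.
rewrite -(exp_ln (K / x ^ k / (sqrt (2 * PI * x) * exp (- x)))); last first.
  by apply: Rdiv_lt_0_compat.
congr exp.
rewrite /Rdiv ln_mult; [|lra|apply: Rinv_0_lt_compat; lra].
rewrite ln_Rinv; last lra.
rewrite ln_mult; [|lra|apply: Rinv_0_lt_compat; lra].
rewrite ln_Rinv; last lra.
rewrite ln_mult; [|lra|lra].
rewrite ln_exp ln_sqrt' //.
rewrite ln_mult; [|lra|lra].
rewrite ln_pow //.
rewrite /u /a -/k -/x -/K.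
have -> : ln (2 * PI) = ln 2 + ln PI by rewrite ln_mult; lra.
field.
Qed.

Lemma stirling_cv : Un_cv stirling_ratio 1.
Proof.
have [C hC] := u_cv.
have h2 := twoC hC.
apply: cv_unshift.
have hv : Un_cv (fun m => u m - ln (2 * PI) / 2) (C - ln (2 * PI) / 2).
  apply: CV_minus; [exact: hC| exact: cv_const].
have := continuity_seq exp _ _ (derivable_continuous_pt _ _ (derivable_pt_exp _)) hv.
have -> : C - ln (2 * PI) / 2 = 0 by lra.
rewrite exp_0 => h.
apply: (Un_cv_ext _ _ _ _ h) => m; by rewrite stir_eq.
Qed.
End Stir.

Import Order.TTheory GRing.Theory Num.Theory.
Local Open Scope ring_scope.

Definition Vs (d n : nat) (V : 'M[R]_(d,n)) (f : 'I_d -> 'I_n) : 'M[R]_d :=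
  \matrix_(a, j) V a (f j).

Lemma det_subm_VtV (n d : nat) (M : 'M[R]_n) (V : 'M[R]_(d,n)) (f : 'I_d -> 'I_n) :
  M = V^T *m V -> \det (subm M f) = \det (Vs V f) ^+ 2.
Proof.
move=> hM.
have -> : subm M f = (Vs V f)^T *m Vs V f.
  apply/matrixP=> i j; rewrite !mxE hM !mxE.
  by apply: eq_bigr => k _; rewrite !mxE.
by rewrite det_mulmx det_tr expr2.
Qed.

Lemma wmxE (n d : nat) (V : 'M[R]_(d,n)) (c : 'I_n -> R) a b :
  wmx V c a b = \sum_i c i * (V a i * V b i).
Proof.
rewrite /wmx summxE; apply: eq_bigr => i _.
by rewrite !mxE big_ord1 !mxE.
Qed.

Lemma detW_A (n d : nat) (V : 'M[R]_(d,n)) (c : 'I_n -> R) :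
  \det (wmx V c) = \sum_(f : {ffun 'I_d -> 'I_n})
     ((\prod_j (c (f j) * V j (f j))) * \det (Vs V f)).
Proof.
rewrite /(determinant (wmx V c)).
under eq_bigr => s _.
  under eq_bigr => i _ do rewrite wmxE.
  rewrite bigA_distr_bigA big_distrr /=.
  over.
rewrite exchange_big /=; apply: eq_bigr => f _.
rewrite -det_tr /(determinant (Vs V f)^T) big_distrr /=.
apply: eq_bigr => s _.
rewrite mulrCA; congr (_ * _).
rewrite -big_split /=; apply: eq_bigr => i _.
by rewrite !mxE mulrA.
Qed.

Lemma Vs_perm (n d : nat) (V : 'M[R]_(d,n)) (f : {ffun 'I_d -> 'I_n}) (s : 'S_d) :
  \det (Vs V [ffun j => f (s j)]) = (-1) ^+ s * \det (Vs V f).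
Proof.
have -> : Vs V [ffun j => f (s j)] = col_perm s (Vs V f).
  by apply/matrixP=> i j; rewrite !mxE ffunE.
by rewrite col_permE det_mulmx det_perm odd_permV mulrC.
Qed.

Lemma detW (n d : nat) (V : 'M[R]_(d,n)) (c : 'I_n -> R) :
  (d`!)%:R * \det (wmx V c) = \sum_(f : {ffun 'I_d -> 'I_n})
     (\prod_j c (f j)) * \det (Vs V f) ^+ 2.
Proof.
rewrite detW_A.
pose P := fun f : {ffun 'I_d -> 'I_n} =>
  (\prod_j (c (f j) * V j (f j))) * \det (Vs V f).
transitivity ((d`!)%:R * \sum_f P f); first by [].
have key : forall s : 'S_d, \sum_f P f = \sum_(f : {ffun 'I_d -> 'I_n})
   (\prod_j c (f j)) * \det (Vs V f) * ((-1) ^+ s * \prod_j V j (f (s j))).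
  move=> s.
  have hinj : injective (fun f : {ffun 'I_d -> 'I_n} => [ffun j => f (s j)]).
    move=> f1 f2 /ffunP h; apply/ffunP => j.
    have := h (s^-1 j)%g; rewrite !ffunE permKV; done.
  rewrite (reindex_inj hinj); apply: eq_bigr => f _.
  rewrite /P Vs_perm big_split /=.
  have -> : \prod_j c ([ffun j => f (s j)] j) = \prod_j c (f j).
    under eq_bigr => j _ do rewrite ffunE.
    exact: (esym (reindex_inj (F := fun j => c (f j)) (@perm_inj _ s))).
  have -> : \prod_j V j ([ffun j => f (s j)] j) = \prod_j V j (f (s j)).
    by apply: eq_bigr => j _; rewrite ffunE.
  move: (\prod_j c (f j)) (\prod_j V j (f (s j))) ((-1) ^+ s) (\det (Vs V f)) => a b e D.
  by rewrite -!mulrA; congr (_ * _); rewrite mulrCA [RHS]mulrCA [b * D]mulrC.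
have -> : (d`!)%:R * \sum_f P f = \sum_(s : 'S_d) \sum_f P f.
  by rewrite sumr_const card_Sn mulr_natl.
under eq_bigr => s _ do rewrite (key s).
rewrite exchange_big /=; apply: eq_bigr => f _.
rewrite -big_distrr /= expr2 mulrA; congr (_ * _).
rewrite /(determinant (Vs V f)); apply: eq_bigr => s _.
by congr (_ * _); apply: eq_bigr => j _; rewrite !mxE.
Qed.

Lemma leRP (x y : R) : reflect (Rle x y) (x <= y). Proof. exact: RlebP. Qed.
Lemma ltRP (x y : R) : reflect (Rlt x y) (x < y). Proof. exact: RltbP. Qed.

Lemma expRle (x y : R) : Rle x y -> Rle (exp x) (exp y).
Proof.
move=> h; case: (Rle_lt_or_eq_dec _ _ h) => h'.
  by left; apply: exp_increasing.
by rewrite h'; right.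
Qed.

Lemma expected_eq (n d : nat) (M : 'M[R]_n) (V : 'M[R]_(d,n)) (c : 'I_n -> R) :
  M = V^T *m V ->
  expected_det d M c = (d`!)%:R / (d%:R ^+ d) * \det (wmx V c).
Proof.
move=> hM; rewrite /expected_det mulrAC mulrC detW big_distrr /=.
apply: eq_bigr => f _; rewrite (det_subm_VtV f hM) big_split /= prodr_const card_ord.
by rewrite exprVn mulrAC [LHS]mulrC.
Qed.

Lemma detW_ge0 (n d : nat) (V : 'M[R]_(d,n)) (c : 'I_n -> R) :
  (forall i, 0 <= c i) -> 0 <= \det (wmx V c).
Proof.
move=> hc.
have hpos : (0 : R) < (d`!)%:R by rewrite ltr0n fact_gt0.
rewrite -(pmulr_rge0 _ hpos) detW; apply: sumr_ge0 => f _.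
apply: mulr_ge0; first by apply: prodr_ge0 => j _; exact: hc.
exact: sqr_ge0.
Qed.

Lemma detUUt (d m : nat) (e : m = d) (U : 'M[R]_(d, m)) :
  \det (U *m U^T) = \det (U^T *m U).
Proof. by subst m; rewrite !det_mulmx det_tr mulrC. Qed.

Lemma det_indicator (n d : nat) (M : 'M[R]_n) (V : 'M[R]_(d,n)) (T : {set 'I_n}) :
  M = V^T *m V -> #|T| = d ->
  \det (wmx V (fun i => (i \in T)%:R)) = pminor M T.
Proof.
move=> hM hT.
pose U : 'M[R]_(d, #|T|) := \matrix_(a, k) V a (enum_val k).
have -> : wmx V (fun i => (i \in T)%:R) = U *m U^T.
  apply/matrixP => a b; rewrite wmxE !mxE.
  rewrite (eq_bigr (fun i => if i \in T then V a i * V b i else 0)); last first.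
    by move=> i _; case: (i \in T); rewrite ?mul1r ?mul0r.
  rewrite -big_mkcond /= big_enum_val; apply: eq_bigr => k _.
  by rewrite !mxE.
rewrite (detUUt hT) /pminor; congr (\det _).
apply/matrixP => i j; rewrite !mxE hM !mxE; apply: eq_bigr => k _.
by rewrite !mxE.
Qed.

Lemma part1 (n d : nat) (M : 'M[R]_n) (V : 'M[R]_(d, n)) (alpha : R)
          (c : 'I_n -> R) :
      M = V^T *m V -> alpha_optimal V alpha c ->
      (d`!)%:R / (d%:R ^+ d) * exp (- alpha) * msd d M <= expected_det d M c.
Proof.
move=> hM [[hc0 hcs] hopt].
rewrite (expected_eq c hM) -mulrA; apply: ler_wpM2l.
  by apply: divr_ge0; rewrite ?exprn_ge0 ?ler0n.
have hW := detW_ge0 V hc0.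
have hexp : forall x : R, 0 < exp x by move=> x; apply/ltRP; exact: exp_pos.
suff hmsd : msd d M <= exp alpha * \det (wmx V c).
  rewrite -(ler_pM2l (hexp alpha)) mulrA.
  have -> : exp alpha * exp (- alpha) = 1.
    by rewrite /GRing.mul /= -exp_plus Rplus_opp_r exp_0.
  by rewrite mul1r.
rewrite /msd; apply: bigmax_le; first by apply: mulr_ge0 => //; apply: ltW.
move=> T /eqP hT.
case: (lerP (pminor M T) 0) => hp.
  by apply: le_trans hp _; apply: mulr_ge0 => //; apply: ltW.
have hc' : feasible d (fun i => (i \in T)%:R).
  split; first by move=> i; case: (i \in T).
  rewrite -hT -sumr_const [RHS]big_mkcond /=; apply: eq_bigr => i _.
  by case: (i \in T).
have := hopt _ hc'.
rewrite /lndet (det_indicator hM hT) hp /=.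
case: ifP => // hWp /leRP h.
move/ltRP: hp => hp; move/ltRP: hWp => hWp.
apply/leRP.
have : Rle (exp (ln (pminor M T))) (exp (alpha + ln (\det (wmx V c)))).
  apply: expRle; rewrite /GRing.add /GRing.opp /= in h; lra.
by rewrite exp_plus !exp_ln.
Qed.


Theorem theorem3p2 :
  (forall (n d : nat) (M : 'M[R]_n) (V : 'M[R]_(d, n)) (alpha : R)
          (c : 'I_n -> R),
      psd M -> \rank M = d -> M = V^T *m V ->
      0 <= alpha -> alpha_optimal V alpha c ->
      (d`!)%:R / (d%:R ^+ d) * exp (- alpha) * msd d M <= expected_det d M c)
  /\ Un_cv stirling_ratio 1%R.
Proof.
split; last exact: Stir.stirling_cv.
move=> n d M V alpha c _ _ hM _ hopt.
exact: part1 hM hopt.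
Qed.
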